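(* Let $\mathcal{G}$ be any Fischer space, let $\ell=\{a,b,c\}$ be a line of $\mathcal{G}$ and let $\mathcal{P}_0$ be the set of points not on $\ell$ and not collinear with any of $a,b,c$. If $v,w\in\mathcal{P}_0$ with $v\sim w$, then $v\wedge w\in\mathcal{P}_0$.
   Context: A 3-transposition group is a pair $(G,D)$ where $D$ is a conjugacy class of involutions generating $G$ with $de$ of order at most $3$ for all $d,e\in D$. Its Fischer space has point set $D$ and as lines the $3$-subsets consisting of the three involutions of a subgroup isomorphic to $\mathrm{Sym}(3)$. Distinct points on a common line are collinear ($p\sim q$), and $p\wedge q$ is the third point of that line. *)

(* Defs.v *)
From mathcomp Require Import all_boot all_fingroup.
Set Implicit Arguments. Unset Strict Implicit. Unset Printing Implicit Defensive.

Record group_str (T : Type) := GroupStr {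
  gmul : T -> T -> T;
  gone : T;
  ginv : T -> T;
  gmulA : forall x y z, gmul x (gmul y z) = gmul (gmul x y) z;
  gmul1 : forall x, gmul gone x = x;
  gmulV : forall x, gmul (ginv x) x = gone }.

Definition gexp (T : Type) (G : group_str T) (x : T) (n : nat) : T :=
  iter n (gmul G x) (gone G).

Inductive generated (T : Type) (G : group_str T) (D : T -> Prop) : T -> Prop :=
  | gen_in x : D x -> generated G D x
  | gen_one : generated G D (gone G)
  | gen_mul x y : generated G D x -> generated G D y -> generated G D (gmul G x y)
  | gen_inv x : generated G D x -> generated G D (ginv G x).

Definition three_transposition_group (T : Type) (G : group_str T) (D : T -> Prop) :=
  [/\ exists d0, forall x, D x <-> exists g, x = gmul G (gmul G (ginv G g) d0) g,
      forall d, D d -> d <> gone G /\ gmul G d d = gone G,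
      forall x, generated G D x
    & forall d e, D d -> D e ->
        exists k, [/\ 1 <= k, k <= 3 & gexp G (gmul G d e) k = gone G]].

(* {a,b,c} is a line of the Fischer space: a 3-subset of D consisting of the
   three involutions of a subgroup isomorphic to Sym(3), i.e. the image of an
   injective homomorphism f : Sym(3) -> G. *)
Definition fischer_line (T : Type) (G : group_str T) (D : T -> Prop) (a b c : T) :=
  [/\ D a, D b, D c, [/\ a <> b, a <> c & b <> c] &
      exists f : {perm 'I_3} -> T,
        [/\ injective f,
            forall s t, f (s * t)%g = gmul G (f s) (f t)
          & forall x, (x = a \/ x = b \/ x = c) <->
              exists s : {perm 'I_3}, [/\ s != 1%g, (s * s)%g = 1%g & x = f s]]].

Definition collinear (T : Type) (G : group_str T) (D : T -> Prop) (p q : T) :=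
  p <> q /\ exists r, fischer_line G D p q r.

Definition P0 (T : Type) (G : group_str T) (D : T -> Prop) (a b c x : T) :=
  [/\ D x, [/\ x <> a, x <> b & x <> c] &
      [/\ ~ collinear G D x a, ~ collinear G D x b & ~ collinear G D x c]].

(* Main.v *)
Require Import Defs.
From mathcomp Require Import all_boot all_fingroup.
From Stdlib Require Import Classical.
Set Implicit Arguments. Unset Strict Implicit. Unset Printing Implicit Defensive.

Definition o0 : 'I_3 := @Ordinal 3 0 isT.
Definition o1 : 'I_3 := @Ordinal 3 1 isT.
Definition o2 : 'I_3 := @Ordinal 3 2 isT.

Definition code (s : {perm 'I_3}) : nat * nat := (nat_of_ord (s o0), nat_of_ord (s o1)).

Definition third (i j : nat) : nat :=
  if (i != 0) && (j != 0) then 0 else if (i != 1) && (j != 1) then 1 else 2.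

Definition ev (c : nat * nat) (n : nat) : nat :=
  if n == 0 then c.1 else if n == 1 then c.2 else third c.1 c.2.

Lemma eval (s : {perm 'I_3}) (x : 'I_3) : nat_of_ord (s x) = ev (code s) x.
Proof.
have H01 : s o0 != s o1 by rewrite (inj_eq perm_inj).
have H02 : s o0 != s o2 by rewrite (inj_eq perm_inj).
have H12 : s o1 != s o2 by rewrite (inj_eq perm_inj).
case: x => [[|[|[|n]]] Hx] //.
- by rewrite /ev /code /=; congr (nat_of_ord (s _)); apply/val_inj.
- by rewrite /ev /code /=; congr (nat_of_ord (s _)); apply/val_inj.
- have -> : Ordinal Hx = o2 by apply/val_inj.
  rewrite /ev /code /=.
  move: H01 H02 H12.
  case: (s o0) => [[|[|[|?]]] ?] //; case: (s o1) => [[|[|[|?]]] ?] //;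
  case: (s o2) => [[|[|[|?]]] ?] //.
Qed.

Lemma code_inj (s t : {perm 'I_3}) : code s = code t -> s = t.
Proof. by move=> H; apply/permP => x; apply/val_inj; rewrite /= !eval H. Qed.

Definition cmul (c d : nat * nat) := (ev d (ev c 0), ev d (ev c 1)).

Lemma code_mul (s t : {perm 'I_3}) : code (s * t)%g = cmul (code s) (code t).
Proof. by rewrite /code /cmul !permM !eval. Qed.

Lemma code1 : code 1%g = (0, 1).
Proof. by rewrite /code !perm1. Qed.

Lemma code_cases (s : {perm 'I_3}) :
  let c := code s in
  c = (0,1) \/ c = (1,0) \/ c = (0,2) \/ c = (2,1) \/ c = (2,0) \/ c = (1,2).
Proof.
have H01 : s o0 != s o1 by rewrite (inj_eq perm_inj).
rewrite /code; move: H01.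
by case: (s o0) => [[|[|[|?]]] ?] //; case: (s o1) => [[|[|[|?]]] ?] //= _; tauto.
Qed.

Lemma inv_codes (s : {perm 'I_3}) : s <> 1%g -> (s * s)%g = 1%g ->
  code s = (1,0) \/ code s = (0,2) \/ code s = (2,1).
Proof.
move=> H1 H2; have := code_mul s s; rewrite H2 code1.
have H3 : code s <> (0,1) by move=> E; apply: H1; apply: code_inj; rewrite E code1.
by case: (code_cases s) => [|[|[|[|[|]]]]] E; rewrite E //=; auto.
Qed.

Lemma code_t01 : code (tperm o0 o1) = (1,0).
Proof. by rewrite /code tpermL tpermR. Qed.
Lemma code_t12 : code (tperm o1 o2) = (0,2).
Proof. by rewrite /code tpermL tpermD. Qed.
Lemma code_t02 : code (tperm o0 o2) = (2,1).
Proof. by rewrite /code tpermL tpermD. Qed.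

Lemma mulgV' T (G : group_str T) x : gmul G x (ginv G x) = gone G.
Proof.
rewrite -[gmul G x _](gmul1 G) -{1}(gmulV G (ginv G x)).
by rewrite -gmulA (gmulA G (ginv G x) x) (gmulV G) (gmul1 G) (gmulV G).
Qed.

Lemma mulg1' T (G : group_str T) x : gmul G x (gone G) = x.
Proof. by rewrite -(gmulV G x) gmulA mulgV' gmul1. Qed.

Lemma inv_uniq T (G : group_str T) a b : gmul G a b = gone G -> ginv G a = b.
Proof. by move=> H; rewrite -[ginv G a](mulg1' G) -H gmulA gmulV gmul1. Qed.

Lemma invMg' T (G : group_str T) x y :
  ginv G (gmul G x y) = gmul G (ginv G y) (ginv G x).
Proof.
apply: inv_uniq.
by rewrite -gmulA (gmulA G y) mulgV' gmul1 mulgV'.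
Qed.

Lemma inv_invol T (G : group_str T) e : gmul G e e = gone G -> ginv G e = e.
Proof. exact: inv_uniq. Qed.

Ltac gnorm G Hdd Hdd2 Hee Hee2 Hded Hded2 :=
  repeat progress rewrite ?gmul1 ?mulg1' -?gmulA ?Hdd ?Hdd2 ?Hee ?Hee2 ?Hded ?Hded2.

Ltac gn a1 a2 a3 a4 a5 a6 := repeat progress rewrite ?gmul1 ?mulg1' -?gmulA ?a1 ?a2 ?a3 ?a4 ?a5 ?a6.
Ltac gnH a1 a2 a3 a4 a5 a6 H := repeat progress rewrite ?gmul1 ?mulg1' -?gmulA ?a1 ?a2 ?a3 ?a4 ?a5 ?a6 in H.

Ltac fin a1 a2 a3 a4 a5 a6 H := gnH a1 a2 a3 a4 a5 a6 H; congruence.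
Ltac m1 a1 a2 a3 a4 a5 a6 G x H := first
  [ let H' := fresh in have H' := f_equal (gmul G x) H; fin a1 a2 a3 a4 a5 a6 H'
  | let H' := fresh in have H' := f_equal (fun z => gmul G z x) H; simpl in H'; fin a1 a2 a3 a4 a5 a6 H' ].
Ltac m2 a1 a2 a3 a4 a5 a6 G d e H := first
  [ fin a1 a2 a3 a4 a5 a6 H | m1 a1 a2 a3 a4 a5 a6 G d H | m1 a1 a2 a3 a4 a5 a6 G e H
  | let H' := fresh in have H' := f_equal (gmul G d) H; first [m1 a1 a2 a3 a4 a5 a6 G d H' | m1 a1 a2 a3 a4 a5 a6 G e H']
  | let H' := fresh in have H' := f_equal (gmul G e) H; first [m1 a1 a2 a3 a4 a5 a6 G d H' | m1 a1 a2 a3 a4 a5 a6 G e H']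
  | let H' := fresh in have H' := f_equal (fun z => gmul G z d) H; simpl in H'; first [m1 a1 a2 a3 a4 a5 a6 G d H' | m1 a1 a2 a3 a4 a5 a6 G e H']
  | let H' := fresh in have H' := f_equal (fun z => gmul G z e) H; simpl in H'; first [m1 a1 a2 a3 a4 a5 a6 G d H' | m1 a1 a2 a3 a4 a5 a6 G e H'] ].

Definition F T (G : group_str T) (d e : T) (c : nat * nat) : T :=
  match c with
  | (1, 0) => d | (0, 2) => e | (2, 1) => gmul G e (gmul G d e)
  | (2, 0) => gmul G d e | (1, 2) => gmul G e d | _ => gone G end.

Lemma make_line T (G : group_str T) (D : T -> Prop) d e :
  three_transposition_group G D -> D d -> D e -> d <> e ->
  gmul G d e <> gmul G e d ->
  gmul G d (gmul G e d) = gmul G e (gmul G d e) ->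
  fischer_line G D d e (gmul G e (gmul G d e)).
Proof.
move=> [[d0 Hcl] Hinv _ _] Dd De nde ncomm Hded.
have [nd1 Hdd] := Hinv d Dd.
have [ne1 Hee] := Hinv e De.
have Hdd2 : forall x, gmul G d (gmul G d x) = x by move=> x; rewrite gmulA Hdd gmul1.
have Hee2 : forall x, gmul G e (gmul G e x) = x by move=> x; rewrite gmulA Hee gmul1.
have Hded2 : forall x, gmul G d (gmul G e (gmul G d x)) = gmul G e (gmul G d (gmul G e x)).
  by move=> x; rewrite (gmulA G e) (gmulA G d) Hded -!gmulA.
have Dr : D (gmul G e (gmul G d e)).
  case/Hcl: Dd => g Hg; apply/Hcl; exists (gmul G g e).
  rewrite invMg' (inv_invol Hee) Hg.
  by rewrite -!gmulA.
pose f := fun s => F G d e (code s).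
split => //.
  split.
  - by move=> H; m2 Hdd Hdd2 Hee Hee2 Hded Hded2 G d e H.
  - by move=> H; m2 Hdd Hdd2 Hee Hee2 Hded Hded2 G d e H.
  - by move=> H; m2 Hdd Hdd2 Hee Hee2 Hded Hded2 G d e H.
exists f; split.
- move=> s t; rewrite /f => H; apply: code_inj; move: H.
  case: (code_cases s) => [|[|[|[|[|]]]]] ->;
  case: (code_cases t) => [|[|[|[|[|]]]]] -> //= H; m2 Hdd Hdd2 Hee Hee2 Hded Hded2 G d e H.
- move=> s t; rewrite /f code_mul.
  case: (code_cases s) => [|[|[|[|[|]]]]] ->;
  case: (code_cases t) => [|[|[|[|[|]]]]] -> /=; gn Hdd Hdd2 Hee Hee2 Hded Hded2; done.
- move=> x; split.
  + case=> [->|[->|->]].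
    * exists (tperm o0 o1); rewrite /f code_t01; split => //.
      - by apply/eqP => E; have := f_equal code E; rewrite code_t01 code1.
      - by apply: code_inj; rewrite code_mul code_t01 code1.
    * exists (tperm o1 o2); rewrite /f code_t12; split => //.
      - by apply/eqP => E; have := f_equal code E; rewrite code_t12 code1.
      - by apply: code_inj; rewrite code_mul code_t12 code1.
    * exists (tperm o0 o2); rewrite /f code_t02; split => //.
      - by apply/eqP => E; have := f_equal code E; rewrite code_t02 code1.
      - by apply: code_inj; rewrite code_mul code_t02 code1.
  + case=> s [/eqP s1 ss ->]; rewrite /f.
    by case: (inv_codes s1 ss) => [|[|]] ->; auto.
Qed.

Lemma line_swap12 T (G : group_str T) D p q r :
  fischer_line G D p q r -> fischer_line G D q p r.
Proof.
case=> Dp Dq Dr [n1 n2 n3] [f [fi fh fs]]; split => //.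
  by split => // E; apply: n1.
exists f; split => // x; have := fs x; tauto.
Qed.

Lemma line_swap23 T (G : group_str T) D p q r :
  fischer_line G D p q r -> fischer_line G D p r q.
Proof.
case=> Dp Dq Dr [n1 n2 n3] [f [fi fh fs]]; split => //.
  by split => // E; apply: n3.
exists f; split => // x; have := fs x; tauto.
Qed.

Lemma line_third T (G : group_str T) D p q r :
  fischer_line G D p q r -> r = gmul G p (gmul G q p).
Proof.
case=> Dp Dq Dr [n1 n2 n3] [f [fi fh fs]].
have [s1 [/eqP a1 b1 e1]] := (fs p).1 (or_introl erefl).
have [s2 [/eqP a2 b2 e2]] := (fs q).1 (or_intror (or_introl erefl)).
have [s3 [/eqP a3 b3 e3]] := (fs r).1 (or_intror (or_intror erefl)).
have k : code s3 = code (s1 * s2 * s1)%g.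
  rewrite !code_mul.
  have d12 : code s1 <> code s2 by move=> E; apply: n1; rewrite e1 e2 (code_inj E).
  have d13 : code s1 <> code s3 by move=> E; apply: n2; rewrite e1 e3 (code_inj E).
  have d23 : code s2 <> code s3 by move=> E; apply: n3; rewrite e2 e3 (code_inj E).
  move: d12 d13 d23.
  by case: (inv_codes a1 b1) => [|[|]] ->; case: (inv_codes a2 b2) => [|[|]] ->;
    case: (inv_codes a3 b3) => [|[|]] ->.
by rewrite e3 (code_inj k) !fh e1 e2 gmulA.
Qed.

Lemma line_noncomm T (G : group_str T) D p q r :
  three_transposition_group G D ->
  fischer_line G D p q r -> gmul G p q <> gmul G q p.
Proof.
move=> HG L E.
have h1 := line_third L.
case: L => Dp _ _ [_ _ n3] _.
case: HG => _ Hinv _ _; have [_ Hpp] := Hinv p Dp.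
apply: n3; rewrite h1 -E gmulA Hpp gmul1 //.
Qed.

Lemma commute_or_line T (G : group_str T) (D : T -> Prop) d e :
  three_transposition_group G D -> D d -> D e -> d <> e ->
  gmul G d e = gmul G e d \/ fischer_line G D d e (gmul G e (gmul G d e)).
Proof.
move=> HG Dd De nde; have HG' := HG.
case: HG => _ Hinv _ Hk.
have [nd1 Hdd] := Hinv d Dd.
have [ne1 Hee] := Hinv e De.
have Hdd2 : forall x, gmul G d (gmul G d x) = x by move=> x; rewrite gmulA Hdd gmul1.
have Hee2 : forall x, gmul G e (gmul G e x) = x by move=> x; rewrite gmulA Hee gmul1.
have [k [k1 k3 H]] := Hk d e Dd De.
move: k1 k3 H; case: k => [|[|[|[|k]]]] //= _ _; rewrite /gexp /=.
- rewrite mulg1' => H; exfalso; apply: nde.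
  by rewrite -(Hdd2 e) H mulg1'.
- rewrite mulg1' -!gmulA => H; left.
  have := f_equal (gmul G e) (f_equal (gmul G d) H).
  by rewrite Hdd2 Hee2 mulg1'.
- rewrite mulg1' -!gmulA => H.
  have := f_equal (gmul G d) (f_equal (gmul G e) (f_equal (gmul G d) H)).
  rewrite Hdd2 Hee2 Hdd2 !mulg1' => Hded.
  case: (classic (gmul G d e = gmul G e d)) => C; [by left | right].
  apply: make_line => //.
Qed.

Lemma not_coll_comm T (G : group_str T) (D : T -> Prop) x y :
  three_transposition_group G D -> D x -> D y -> x <> y -> ~ collinear G D x y ->
  gmul G x y = gmul G y x.
Proof.
move=> HG Dx Dy nxy nc.
case: (commute_or_line HG Dx Dy nxy) => // L.
by exfalso; apply: nc; split => //; eexists; exact: L.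
Qed.

Lemma aux T (G : group_str T) (D : T -> Prop) v w u a :
  three_transposition_group G D -> fischer_line G D v w u -> D a ->
  v <> a -> w <> a -> ~ collinear G D v a -> ~ collinear G D w a ->
  u <> a /\ ~ collinear G D u a.
Proof.
move=> HG L Da nva nwa cva cwa.
have L' := L; case: L' => Dv Dw Du _ _.
split.
  move=> E; apply: cva; split => //; exists w; rewrite -E; exact: line_swap23 L.
case=> _ [r Lua].
have c1 := not_coll_comm HG Dv Da nva cva.
have c2 := not_coll_comm HG Dw Da nwa cwa.
apply: (line_noncomm HG Lua).
rewrite (line_third L).
by rewrite -!gmulA c1 (gmulA G w a v) c2 -gmulA (gmulA G v a) c1 -!gmulA.
Qed.

Theorem proposition5p23 (T : Type) (G : group_str T) (D : T -> Prop)
  (HG : three_transposition_group G D) (a b c : T)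
  (Hl : fischer_line G D a b c) (v w : T)
  (Hv : P0 G D a b c v) (Hw : P0 G D a b c w) (Hvw : collinear G D v w) :
  forall u : T, fischer_line G D v w u -> P0 G D a b c u.
Proof.
move=> u L.
case: Hv => Dv [va vb vc] [cva cvb cvc].
case: Hw => Dw [wa wb wc] [cwa cwb cwc].
case: (Hl) => Da Db Dc _ _.
have [ua nua] := aux HG L Da va wa cva cwa.
have [ub nub] := aux HG L Db vb wb cvb cwb.
have [uc nuc] := aux HG L Dc vc wc cvc cwc.
by case: L => _ _ Du _ _; split.
Qed.
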